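(* Let $q$ be a prime power, $n\ge1$, $d\in\mathbb F_q$, and $P=\sum_{s\ge0}a_s\theta^s\in\mathbb F_q[\theta]$ nonzero; put $P_2(\theta)=P(\theta+d)$. For a polynomial $R=\sum_s b_s\theta^s$ let $\mathfrak M(R,n,T)$ be the infinite matrix with rows and columns indexed by $i,j\in\{0,1,2,\dots\}$ and entries $$\mathfrak M(R,n,T)_{ij}=\sum_{l=0}^nT^{n-l}(-1)^l\binom nl b_{(i+1)q-(j+1)-l},$$ where $b_s=0$ for $s<0$ or $s>\deg R$. Let $W$ be the infinite upper triangular matrix with $W_{ij}=\binom ji d^{j-i}$ for $j\ge i$ and $W_{ij}=0$ for $j<i$ (with $d^0=1$). Then $W$ is invertible, all products below involve only finite sums, and $$\mathfrak M(P_2,n,T-d)=W\,\mathfrak M(P,n,T)\,W^{-1},$$ where $\mathfrak M(P_2,n,T-d)$ denotes $\mathfrak M(P_2,n,T)$ with $T$ replaced by $T-d$.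
   Context: Binomial coefficients are read in $\mathbb F_q$. The inverse of $W$ is the matrix of the same form with $d$ replaced by $-d$. *)

(* Defs.v *)
From HB Require Import structures.
From mathcomp Require Import all_boot all_order all_algebra all_field.
Set Implicit Arguments. Unset Strict Implicit. Unset Printing Implicit Defensive.
Import GRing.Theory.
Local Open Scope ring_scope.

Definition infmx (R : Type) := nat -> nat -> R.

(* b_s of R, with b_s = 0 for s < 0 (s given as a - c with a c : nat). *)
Definition coef_sub (F : fieldType) (R : {poly F}) (a c : nat) : F :=
  if (c <= a)%N then R`_(a - c) else 0.

Definition frakM (F : finFieldType) (R : {poly F}) (n : nat) : infmx {poly F} :=
  fun i j => \sum_(l < n.+1)
    'X ^+ (n - l) * ((-1) ^+ l * ('C(n, l))%:R * coef_sub R (i.+1 * #|F|) (j.+1 + l))%:P.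

Definition Wmx (F : fieldType) (d : F) : infmx {poly F} :=
  fun i j => if (i <= j)%N then ((('C(j, i))%:R * d ^+ (j - i)) : F)%:P else 0.

Definition idmx_inf (F : fieldType) : infmx {poly F} := fun i j => (i == j)%:R.

Definition prod_finite (F : fieldType) (A B : infmx {poly F}) : Prop :=
  forall i k, exists N, forall j, (N <= j)%N -> A i j * B j k = 0.

(* C is the product A B (the sums being finite, they stabilize). *)
Definition is_prod (F : fieldType) (A B C : infmx {poly F}) : Prop :=
  forall i k, exists N, forall N', (N <= N')%N -> C i k = \sum_(j < N') A i j * B j k.

Definition map_infmx (R S : Type) (f : R -> S) (A : infmx R) : infmx S :=
  fun i j => f (A i j).

(* Main.v *)
Require Import Defs.
From HB Require Import structures.
From mathcomp Require Import all_boot all_order all_algebra all_field.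
From mathcomp Require Import all_fingroup all_solvable.
From mathcomp Require Import zify ring.
Import GRing.Theory.
Local Open Scope ring_scope.

Lemma sum_widen (R : nmodType) (f : nat -> R) N N' : (N <= N')%N ->
  (forall m, (N <= m)%N -> f m = 0) -> \sum_(m < N') f m = \sum_(m < N) f m.
Proof.
move=> le fz; rewrite -!(big_mkord xpredT) (big_cat_nat (leq0n N) le) /=.
rewrite [X in _ + X]big1_seq ?addr0 // => m /andP[_]; rewrite mem_index_iota => /andP[h _]; exact: fz.
Qed.

Lemma sum_single (R : nmodType) (f : nat -> R) i n :
  (forall j, j != i -> f j = 0) -> \sum_(j < n) f j = if (i < n)%N then f i else 0.
Proof.
move=> fz; rewrite (bigID (fun j : 'I_n => j == i :> nat)) /= [X in _ + X]big1 ?addr0.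
  exact: big_ord1_eq.
by move=> j /fz.
Qed.

Lemma poly_expand (R : nzRingType) (p : {poly R}) N : (size p <= N)%N ->
  p = \sum_(j < N) p`_j *: 'X^j.
Proof.
move=> le; rewrite -{1}[p]coefK poly_def.
symmetry; apply: (@sum_widen _ (fun j : nat => p`_j *: 'X^j) (size p) N le) => m hm.
by rewrite nth_default ?scale0r // (leq_trans le).
Qed.

Lemma comp_expand (R : comNzRingType) (p r : {poly R}) N : (size p <= N)%N ->
  p \Po r = \sum_(j < N) p`_j *: r ^+ j.
Proof.
move=> le; rewrite comp_polyE.
symmetry; apply: (@sum_widen _ (fun j : nat => p`_j *: r ^+ j) (size p) N le) => m hm.
by rewrite nth_default ?scale0r // (leq_trans le).
Qed.

Lemma coef_shift (R : comNzRingType) (c : R) j i :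
  (('X + c%:P) ^+ j)`_i = if (i <= j)%N then ('C(j, i))%:R * c ^+ (j - i) else 0.
Proof.
rewrite exprDn coef_sum.
rewrite (eq_bigr (fun k : 'I_j.+1 => if (k == (j - i)%N :> nat) then
            (c ^+ (j - i) *+ 'C(j, i)) * (i <= j)%N%:R else 0)); last first.
  move=> k _; rewrite coefMn -polyC_exp coefMC coefXn.
  have kj := ltn_ord k.
  case: (boolP (k == (j - i)%N :> nat)) => [/eqP e|ne].
    case: (leqP i j) => h.
      have -> : (i == j - k)%N by apply/eqP; lia.
      by rewrite e mulr1n mul1r mulr1 bin_sub.
    have -> : (i == j - k)%N = false by apply/eqP; lia.
    by rewrite mul0r mul0rn mulr0.
  have -> : (i == j - k)%N = false by apply/eqP => e'; move/eqP: ne; lia.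
  by rewrite mul0r mul0rn.
rewrite (@sum_single _ (fun k => if (k == (j - i)%N :> nat) then
            (c ^+ (j - i) *+ 'C(j, i)) * (i <= j)%N%:R else 0) (j - i)%N); last first.
  by move=> k /negPf ->.
rewrite eqxx; have -> : (j - i < j.+1)%N by lia.
by case: leqP => h; rewrite ?mulr1 ?mulr0 // -mulr_natl.
Qed.


Lemma frob_shift (F : finFieldType) (d : F) :
  ('X + (d%:P)%:P : {poly {poly F}}) ^+ #|F| = 'X ^+ #|F| + (d%:P)%:P.
Proof.
have [p pr pc] := finPcharP F.
have pn : p.-nat #|F|.
  by have := abelem_pgroup (fin_ring_pchar_abelem pc); rewrite /pgroup cardsT.
have e : [pchar {poly {poly F}}] =i (p : nat_pred).
  by move=> x; rewrite !pchar_poly (pcharf_eq pc).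
rewrite -(eq_pnat _ e) in pn.
by rewrite exprDn_pchar // -!polyC_exp expf_card.
Qed.

Lemma Wmx_coef (F : fieldType) (d : F) i m :
  Wmx d i m = (('X + (d%:P)%:P : {poly {poly F}}) ^+ m)`_i.
Proof.
rewrite coef_shift /Wmx; case: leqP => // _.
by rewrite rmorphM rmorphXn rmorph_nat.
Qed.

Lemma cart_mono (F : finFieldType) (d : F) s i :
  (('X + (d%:P)%:P : {poly {poly F}}) ^+ s)`_(i * #|F| + #|F|.-1) =
  if (s %% #|F| == #|F|.-1)%N then (('X + (d%:P)%:P) ^+ (s %/ #|F|))`_i else 0.
Proof.
have q1 : (1 < #|F|)%N := finNzRing_gt1 F.
set q := #|F| in q1 *.
set Y := ('X + (d%:P)%:P : {poly {poly F}}).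
have rq : (s %% q < q)%N by rewrite ltn_pmod //; lia.
rewrite {1}(_ : s = q * (s %/ q) + s %% q)%N; last by rewrite mulnC -divn_eq.
rewrite exprD exprM frob_shift.
set a := (s %/ q)%N; set r := (s %% q)%N.
have -> : ('X ^+ q + (d%:P)%:P) ^+ a = (Y ^+ a) \Po 'X^q.
  by rewrite rmorphXn /= comp_polyD comp_polyX comp_polyC.
set iq := (i * q)%N.
rewrite mulrC coefM.
rewrite (@sum_single _ (fun j => (Y ^+ r)`_j * ((Y ^+ a) \Po 'X^q)`_(iq + q.-1 - j)) q.-1);
  last first.
  move=> j ne; rewrite /Y coef_shift; case: (leqP j r) => hj; last by rewrite mul0r.
  rewrite coef_comp_poly_Xn; last by lia.
  have -> : (iq + q.-1 - j = (q.-1 - j) + i * q)%N by rewrite /iq; lia.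
  rewrite dvdn_addl ?dvdn_mull //.
  have nd : ~~ (q %| q.-1 - j)%N.
    apply/negP => dv; have := dvdn_leq _ dv; move/eqP: ne; lia.
  by rewrite (negPf nd) mulr0.
have -> : (q.-1 < (iq + q.-1).+1)%N by lia.
rewrite coef_comp_poly_Xn; last by lia.
have -> : (iq + q.-1 - q.-1 = i * q)%N by rewrite /iq; lia.
rewrite dvdn_mull // mulnK; last by lia.
rewrite /Y coef_shift.
case: (boolP (r == q.-1)) => [/eqP ->|ne].
  by rewrite leqnn binn subnn expr0 mulr1 mul1r.
have -> : (q.-1 <= r)%N = false by move/eqP: ne; lia.
by rewrite mul0r.
Qed.

Lemma cartier (F : finFieldType) (d : F) (g : {poly {poly F}}) B i :
  (size g <= B * #|F|)%N ->
  \sum_(m < B) Wmx d i m * g`_(m * #|F| + #|F|.-1) =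
  (g \Po ('X + (d%:P)%:P))`_(i * #|F| + #|F|.-1).
Proof.
move=> sz.
have q1 : (1 < #|F|)%N := finNzRing_gt1 F.
set q := #|F| in q1 sz *.
rewrite (@comp_expand _ g _ _ sz) coef_sum.
have -> : \sum_(m < B) Wmx d i m * g`_(m * q + q.-1) =
  \sum_(m < B) \sum_(s < B * q) Wmx d i m *
     (if (s == m * q + q.-1 :> nat)%N then g`_s else 0).
  apply: eq_bigr => m _.
  rewrite (@sum_single _ (fun s => Wmx d i m *
     (if (s == m * q + q.-1)%N then g`_s else 0)) (m * q + q.-1)%N); last first.
    by move=> s /negPf ->; rewrite mulr0.
  have mB := ltn_ord m.
  have -> : (m * q + q.-1 < B * q)%N.
    have : (m.+1 * q <= B * q)%N by rewrite leq_mul2r mB orbT.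
    rewrite mulSn; lia.
  by rewrite eqxx.
rewrite exchange_big /=; apply: eq_bigr => s _.
rewrite coefZ cart_mono.
rewrite (@sum_single _ (fun m => Wmx d i m *
     (if (s == m * q + q.-1 :> nat)%N then g`_s else 0)) (s %/ q)%N); last first.
  move=> m ne; case: eqP => [e|]; last by rewrite mulr0.
  move/eqP: ne; rewrite e divnDl ?dvdn_mull // mulnK; last by lia.
  by rewrite divn_small ?addn0 ?eqxx //; lia.
have sB := ltn_ord s.
have -> : (s %/ q < B)%N by rewrite ltn_divLR; lia.
have -> : (s == s %/ q * q + q.-1 :> nat)%N = (s %% q == q.-1)%N.
  by rewrite {1}(divn_eq s q) eqn_add2l.
by case: ifP; rewrite ?mulr0 // Wmx_coef mulrC.
Qed.


Lemma E_coef (F : fieldType) (U : {poly F}) n l :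
  (((U%:P - 'X) ^+ n : {poly {poly F}}))`_l =
  if (l <= n)%N then U ^+ (n - l) * ((-1) ^+ l * ('C(n, l))%:R)%:P else 0.
Proof.
have -> : (U%:P - 'X : {poly {poly F}}) = - ('X + (- U)%:P).
  by rewrite opprD polyCN opprK addrC.
have cN : forall (p : {poly {poly F}}) k i, ((-1) ^+ k * p)`_i = (-1) ^+ k * p`_i.
  move=> p k i; elim: k => [|k IH]; first by rewrite !expr0 !mul1r.
  by rewrite !exprS -!mulrA !mulN1r coefN IH.
rewrite (exprNn ('X + _)) cN coef_shift.
case: leqP => h; last by rewrite mulr0.
have sq : forall k, (-1 : {poly F}) ^+ k * (-1) ^+ k = 1.
  by move=> k; rewrite -exprMn mulrNN mulr1 expr1n.
rewrite rmorphM rmorphXn rmorphN1 rmorph_nat (exprNn U).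
set t := (-1 : {poly F}) ^+ (n - l); set u := (-1 : {poly F}) ^+ l.
have tt : t * t = 1 by exact: sq.
have -> : (-1 : {poly F}) ^+ n = t * u by rewrite -exprD subnK.
have -> : t * u * ('C(n, l)%:R * (t * U ^+ (n - l))) =
   (t * t) * (U ^+ (n - l) * (u * 'C(n, l)%:R)) by ring.
by rewrite tt mul1r.
Qed.

Lemma frak_gen (F : fieldType) (U R : {poly F}) n a j : (0 < a)%N ->
  \sum_(l < n.+1) U ^+ (n - l) * ((-1) ^+ l * ('C(n, l))%:R * coef_sub R a (j.+1 + l))%:P
  = (((U%:P - 'X) ^+ n) * map_poly polyC R * 'X^j)`_(a.-1).
Proof.
move=> a0.
set E := ((U%:P - 'X) ^+ n : {poly {poly F}}).
have szE : (size E <= n.+1)%N.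
  by apply/leq_sizeP => l hl; rewrite /E E_coef ifN //; lia.
rewrite (@poly_expand _ _ _ szE) !mulr_suml coef_sum.
apply: eq_bigr => l _.
have ln : (l <= n)%N by have := ltn_ord l; lia.
rewrite -!scalerAl coefZ /E E_coef ln.
rewrite (_ : 'X^l * R^:P * 'X^j = R^:P * 'X^(l + j)); last first.
  by rewrite (mulrC 'X^l) -mulrA exprD.
rewrite coefMXn coef_map /=.
rewrite /coef_sub polyCM mulrA.
case: ifP => h1; case: ifP => h2; try lia.
- by have -> : (a.-1 - (l + j) = a - (j.+1 + l))%N by lia.
- by rewrite polyC0.
Qed.


Lemma frak_form (F : finFieldType) (R : {poly F}) n i j :
  frakM R n i j = (((('X : {poly F})%:P - 'X) ^+ n) * R^:P * 'X^j)`_(i * #|F| + #|F|.-1).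
Proof.
have q1 : (1 < #|F|)%N := finNzRing_gt1 F.
have -> : (i * #|F| + #|F|.-1 = (i.+1 * #|F|).-1)%N by rewrite mulSn; lia.
rewrite -frak_gen; last by rewrite mulSn; lia.
 by [].
Qed.

Lemma frak_comp (F : finFieldType) (R : {poly F}) n i j (u : {poly F}) :
  frakM R n i j \Po u = (((u%:P - 'X) ^+ n) * R^:P * 'X^j)`_(i * #|F| + #|F|.-1).
Proof.
have q1 : (1 < #|F|)%N := finNzRing_gt1 F.
have -> : (i * #|F| + #|F|.-1 = (i.+1 * #|F|).-1)%N by rewrite mulSn; lia.
rewrite -frak_gen; last by rewrite mulSn; lia.
rewrite /frakM raddf_sum; apply: eq_bigr => l _.
rewrite -[LHS]/(_ \Po u). by rewrite comp_polyM comp_polyC comp_Xn_poly.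
Qed.

Lemma Wz (F : fieldType) (d : F) j k : (k < j)%N -> Wmx d j k = 0.
Proof. by move=> h; rewrite /Wmx leqNgt h. Qed.

Lemma size_shift (F : fieldType) (c : {poly F}) k :
  (size (('X + c%:P) ^+ k) <= k.+1)%N.
Proof. by apply/leq_sizeP => l hl; rewrite coef_shift ifN //; lia. Qed.

Lemma W_inv_prod (F : fieldType) (d : F) i k N : (k < N)%N ->
  \sum_(j < N) Wmx d i j * Wmx (- d) j k = (i == k)%:R.
Proof.
move=> kN.
have sz : (size (('X + ((- d)%:P)%:P : {poly {poly F}}) ^+ k) <= N)%N.
  exact: leq_trans (size_shift _ _ k) kN.
rewrite -[RHS](coefXn ({poly F}) k i).
have -> : ('X^k : {poly {poly F}}) =
   (('X + ((- d)%:P)%:P) ^+ k) \Po ('X + (d%:P)%:P).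
  by rewrite rmorphXn /= comp_polyD comp_polyX comp_polyC !polyCN addrK.
rewrite (@comp_expand _ _ _ _ sz) coef_sum; apply: eq_bigr => j _.
by rewrite coefZ mulrC !Wmx_coef.
Qed.


Lemma Mzero (F : finFieldType) (P : {poly F}) n m j :
  (size P + n + j < m)%N -> frakM P n m j = 0.
Proof.
move=> h; have q1 : (1 < #|F|)%N := finNzRing_gt1 F.
rewrite /frakM big1 // => l _.
have ln := ltn_ord l.
rewrite /coef_sub; case: ifP => _; last by rewrite mulr0 polyC0 mulr0.
have : (m.+1 * 2 <= m.+1 * #|F|)%N by rewrite leq_mul2l q1 orbT.
set z := (m.+1 * #|F|)%N => hz.
clearbody z; rewrite nth_default ?mulr0 ?polyC0 ?mulr0 //.
move: ln h hz; set s := size _; clearbody s; lia.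
Qed.

Theorem proposition5p1p2 (F : finFieldType) (n : nat) (d : F) (P : {poly F}) :
  (0 < n)%N -> P != 0 ->
  let P2 := P \Po ('X + d%:P) in
  let W := Wmx d in
  let Winv := Wmx (- d) in
  let M := frakM P n in
  let M2 := map_infmx (fun p => p \Po ('X - d%:P)) (frakM P2 n) in
  (prod_finite W Winv /\ is_prod W Winv (@idmx_inf F) /\
   prod_finite Winv W /\ is_prod Winv W (@idmx_inf F)) /\
  (prod_finite W M /\
   exists WM, is_prod W M WM /\ prod_finite WM Winv /\ is_prod WM Winv M2).
Proof.
move=> _ _ P2 W Winv M M2.
have q1 : (1 < #|F|)%N := finNzRing_gt1 F.
split.
  split; first by move=> i k; exists k.+1 => j hj; rewrite /Winv Wz ?mulr0.
  split; first by move=> i k; exists k.+1 => N' hN; rewrite W_inv_prod.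
  split; first by move=> i k; exists k.+1 => j hj; rewrite /W Wz ?mulr0.
  move=> i k; exists k.+1 => N' hN; rewrite /Winv /W.
  by rewrite -{2}(opprK d) W_inv_prod.
pose Bk j := (size P + n + j).+1.
have Mz : forall m j, (Bk j <= m)%N -> M m j = 0.
  by move=> m j h; apply: Mzero; rewrite /Bk in h; lia.
split; first by move=> i k; exists (Bk k) => j hj; rewrite Mz ?mulr0.
exists (fun i k => \sum_(m < Bk k) W i m * M m k).
split.
  move=> i k; exists (Bk k) => N' hN; symmetry.
  apply: (@sum_widen _ (fun m => W i m * M m k) (Bk k) N' hN) => m hm.
  by rewrite Mz ?mulr0.
split; first by move=> i k; exists k.+1 => j hj; rewrite /Winv Wz ?mulr0.
move=> i k; exists k.+1 => N' hN.
rewrite (@sum_widen _ (fun j => (\sum_(m < Bk j) W i m * M m j) * Winv j k) k.+1 N' hN);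
  last by move=> m hm; rewrite /Winv Wz ?mulr0.
set G := ((('X : {poly F})%:P - 'X) ^+ n * P^:P : {poly {poly F}}).
set Yc := (('X + ((- d)%:P)%:P : {poly {poly F}}) ^+ k).
have inner : forall m, \sum_(j < k.+1) M m j * Winv j k =
   (G * Yc)`_(m * #|F| + #|F|.-1).
  move=> m.
  have -> : Yc = \sum_(j < k.+1) Yc`_j *: 'X^j.
    exact: poly_expand (size_shift _ _ k).
  rewrite mulr_sumr coef_sum; apply: eq_bigr => j _.
  by rewrite /M frak_form -scalerAr coefZ mulrC /Winv Wmx_coef.
transitivity (\sum_(m < Bk k) W i m * (\sum_(j < k.+1) M m j * Winv j k)); last first.
  symmetry.
  rewrite (eq_bigr (fun j : 'I_k.+1 => \sum_(m < Bk k) W i m * M m j * Winv j k)); last first.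
    move=> j _; rewrite mulr_suml.
    have jk := ltn_ord j.
    symmetry; apply: (@sum_widen _ (fun m => W i m * M m j * Winv j k) (Bk j) (Bk k)).
      by rewrite /Bk; lia.
    by move=> m hm; rewrite Mz ?mulr0 ?mul0r.
  rewrite exchange_big /=; apply: eq_bigr => m _.
  by rewrite mulr_sumr; apply: eq_bigr => j _; rewrite mulrA.
under eq_bigr do rewrite inner.
rewrite /W cartier; last first.
  have s1 := size_polyMleq G Yc.
  have s2 := size_polyMleq ((('X : {poly F})%:P - 'X) ^+ n : {poly {poly F}}) P^:P.
  rewrite size_map_polyC -/G in s2.
  have s3 : (size ((('X : {poly F})%:P - 'X) ^+ n : {poly {poly F}}) <= n.+1)%N.
    by apply/leq_sizeP => l hl; rewrite E_coef ifN //; lia.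
  have s4 : (size Yc <= k.+1)%N by exact: size_shift.
  have s5 : (Bk k <= Bk k * #|F|)%N by rewrite leq_pmulr //; lia.
  move: s1 s2 s3 s4 s5; rewrite /Bk.
  set a1 := size (G * Yc); set a2 := size G; set a3 := size Yc.
  set a4 := size ((('X : {poly F})%:P - 'X) ^+ n : {poly {poly F}}); set a5 := size P; set a6 := ((_ * #|F|)%N).
  clearbody a1 a2 a3 a4 a5 a6; lia.
rewrite /M2 /map_infmx frak_comp.
congr (_ `_ _).
rewrite /G /Yc !comp_polyM.
have e1 : ((('X : {poly F})%:P - 'X) ^+ n : {poly {poly F}}) \Po ('X + (d%:P)%:P)
    = ((('X - d%:P)%:P - 'X) ^+ n).
  rewrite rmorphXn /= comp_polyB comp_polyC comp_polyX polyCB.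
  congr (_ ^+ n); ring.
have e2 : (P^:P \Po ('X + (d%:P)%:P)) = P2^:P.
  by rewrite /P2 map_comp_poly rmorphD /= map_polyX map_polyC.
have e3 : ('X + ((- d)%:P)%:P : {poly {poly F}}) ^+ k \Po ('X + (d%:P)%:P) = 'X^k.
  by rewrite rmorphXn /= comp_polyD comp_polyX comp_polyC !polyCN addrK.
by rewrite e1 e2 e3.
Qed.
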